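(* If $\bar\alpha,\bar\beta\in\{0,1\}^k$ and $\bar\alpha\ne\bar\beta$, then $F_{\bar\alpha}\cap F_{\bar\beta}=\varnothing$, $$d_H(F_{\bar\alpha},F_{\bar\beta})<\frac{3\sqrt5}{5^{|\bar\alpha\wedge\bar\beta|}},\qquad d(F_{\bar\alpha},F_{\bar\beta})\ge\frac{1}{5^{|\bar\alpha\wedge\bar\beta|+1}}.$$
   Context: Let $I=[0,1]^3$. Let $\mathcal D_0=\{(i,2,2),(2,i,2),(2,2,i): i=0,1,2,3,4\}$ and $\mathcal D_1=\{d\in\{0,\ldots,4\}^3:\ \text{at least two coordinates of } d \text{ lie in }\{0,4\}\}$. For $i=0,1$ let $T_i(A)=\bigcup_{d\in\mathcal D_i}\frac{d+A}{5}$, and for $\bar\alpha=\alpha_1\cdots\alpha_k$ let $F_{\bar\alpha}=T_{\alpha_1}\circ\cdots\circ T_{\alpha_k}(I)$. $|\bar\alpha\wedge\bar\beta|$ denotes the length of the longest common initial segment of $\bar\alpha$ and $\bar\beta$. $d_H$ is the Hausdorff distance and $d(A,B)=\inf\{|a-b|:a\in A,b\in B\}$. *)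

(* Defs.v *)
From Stdlib Require Import Reals List.
From Coquelicot Require Import Coquelicot.
Open Scope R_scope.

Definition pt := (R * R * R)%type.
Definition pset := pt -> Prop.

Definition edist (p q : pt) : R :=
  let '(x1, y1, z1) := p in let '(x2, y2, z2) := q in
  sqrt ((x1 - x2)^2 + (y1 - y2)^2 + (z1 - z2)^2).

Definition cubeI : pset := fun p =>
  let '(x, y, z) := p in 0 <= x <= 1 /\ 0 <= y <= 1 /\ 0 <= z <= 1.

Definition D0 (d : nat * nat * nat) : Prop :=
  let '(a, b, c) := d in
  (a <= 4 /\ b = 2 /\ c = 2)%nat \/ (a = 2 /\ b <= 4 /\ c = 2)%nat
  \/ (a = 2 /\ b = 2 /\ c <= 4)%nat.

Definition in04 (n : nat) : Prop := n = 0%nat \/ n = 4%nat.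

Definition D1 (d : nat * nat * nat) : Prop :=
  let '(a, b, c) := d in
  (a <= 4 /\ b <= 4 /\ c <= 4)%nat /\
  ((in04 a /\ in04 b) \/ (in04 a /\ in04 c) \/ (in04 b /\ in04 c)).

Definition Dset (i : bool) := if i then D1 else D0.

Definition Tmap (i : bool) (A : pset) : pset := fun p =>
  exists a b c x y z, Dset i (a, b, c) /\ A (x, y, z) /\
    p = ((INR a + x) / 5, (INR b + y) / 5, (INR c + z) / 5).

(* Words alpha in {0,1}^k as lists of booleans (false = 0, true = 1);
   F_{a1...ak} = T_{a1} o ... o T_{ak} (I). *)
Fixpoint Fw (w : list bool) : pset :=
  match w with nil => cubeI | i :: w' => Tmap i (Fw w') end.

Fixpoint lcp (u v : list bool) : nat :=
  match u, v with
  | i :: u', j :: v' => if Bool.eqb i j then S (lcp u' v') else 0%nat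
  | _, _ => 0%nat
  end.

(* d(A,B) = inf { |a-b| : a in A, b in B }  (in Rbar; +oo if empty) *)
Definition setdist (A B : pset) : Rbar :=
  Glb_Rbar (fun r => exists a b, A a /\ B b /\ r = edist a b).

Definition hausdorff (A B : pset) : Rbar :=
  Glb_Rbar (fun e => 0 <= e /\
    (forall a, A a -> exists b, B b /\ edist a b <= e) /\
    (forall b, B b -> exists a, A a /\ edist a b <= e)).

(* Main.v *)
Require Import Defs.
From Stdlib Require Import Reals List Lra Lia Psatz.
From Coquelicot Require Import Coquelicot.
Open Scope R_scope.

Lemma D_bound i a b c : Dset i (a,b,c) -> (a <= 4 /\ b <= 4 /\ c <= 4)%nat.
Proof. destruct i; simpl; unfold in04; intros; lia. Qed.

Lemma INR4 n : (n <= 4)%nat -> 0 <= INR n <= 4.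
Proof. intros; split; [apply pos_INR|]. replace 4 with (INR 4) by (simpl; lra). apply le_INR; auto. Qed.

Lemma Fw_cube w p : Fw w p -> cubeI p.
Proof.
  revert p; induction w as [|i w IH]; simpl; intros p H; auto.
  destruct H as (a&b&c&x&y&z&HD&HA&->). apply IH in HA. simpl in HA.
  apply D_bound in HD. destruct HD as (Ha&Hb&Hc).
  apply INR4 in Ha; apply INR4 in Hb; apply INR4 in Hc. simpl. lra.
Qed.

Lemma Fw_ne w : exists p, Fw w p.
Proof.
  induction w as [|i w [[[x y] z] IH]]; simpl.
  - exists (0,0,0); simpl; lra.
  - destruct i.
    + exists ((INR 0 + x)/5, (INR 0 + y)/5, (INR 0+z)/5). exists 0%nat,0%nat,0%nat,x,y,z.
      simpl. unfold in04. repeat split; auto; lia.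
    + exists ((INR 2 + x)/5, (INR 2 + y)/5, (INR 2+z)/5). exists 2%nat,2%nat,2%nat,x,y,z.
      simpl. repeat split; auto; lia.
Qed.

Lemma decomp (g w : list bool) p : Fw (g ++ w) p ->
  exists (n1 n2 n3 : nat) x y z, Fw w (x,y,z) /\
   p = ((INR n1 + x)/5^(length g), (INR n2 + y)/5^(length g), (INR n3 + z)/5^(length g)).
Proof.
  revert p; induction g as [|i g IH]; simpl; intros p H.
  - destruct p as [[x y] z]. exists 0%nat,0%nat,0%nat,x,y,z. split; auto. simpl.
    replace ((0 + x)/1) with x by field. replace ((0 + y)/1) with y by field.
    replace ((0 + z)/1) with z by field. reflexivity.
  - destruct H as (a&b&c&x&y&z&HD&HA&->).
    destruct (IH _ HA) as (n1&n2&n3&x'&y'&z'&Hw&E). injection E; intros -> -> ->.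
    exists (a * 5^(length g) + n1)%nat, (b * 5^(length g) + n2)%nat, (c * 5^(length g) + n3)%nat, x',y',z'.
    split; auto.
    assert (P: 5 ^ length g <> 0) by (apply pow_nonzero; lra).
    rewrite !plus_INR, !mult_INR, !pow_INR. replace (INR 5) with 5 by (simpl; lra).
    f_equal; [f_equal|]; field; auto.
Qed.

Definition mid (u : R) := 2/5 <= u <= 3/5.
Definition outr (v : R) := (0 <= v <= 1/5) \/ (4/5 <= v <= 1).

Lemma INR_dig n : (n <= 4)%nat -> n = 0%nat \/ n = 1%nat \/ n = 2%nat \/ n = 3%nat \/ n = 4%nat.
Proof. lia. Qed.

Lemma sep01 A B p q : (forall u, A u -> cubeI u) -> (forall u, B u -> cubeI u) ->
  Tmap false A p -> Tmap true B q ->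
  let '(p1,p2,p3) := p in let '(q1,q2,q3) := q in
  (mid p1 /\ outr q1) \/ (mid p2 /\ outr q2) \/ (mid p3 /\ outr q3).
Proof.
  intros HA HB (a&b&c&x&y&z&HD&Hx&->) (a'&b'&c'&x'&y'&z'&HD'&Hx'&->).
  apply HA in Hx; apply HB in Hx'; simpl in Hx, Hx', HD, HD'. unfold mid, outr.
  unfold in04 in HD'.
  destruct HD' as [Hb' HD'].
  destruct HD as [(Ha&->&->)|[(->&Hb&->)|(->&->&Hc)]];
  destruct HD' as [[[-> | ->] [-> | ->]]|[[[-> | ->] [-> | ->]]|[[-> | ->] [-> | ->]]]];
  simpl; lra.
Qed.

Lemma intgap (n m : nat) u v : mid u -> outr v -> 1/5 <= Rabs ((INR n + u) - (INR m + v)).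
Proof.
  unfold mid, outr; intros Hu Hv.
  destruct (Compare_dec.lt_eq_lt_dec n m) as [[H|H]|H].
  - assert (INR n + 1 <= INR m) by (rewrite <- S_INR; apply le_INR; lia).
    rewrite Rabs_left1; lra.
  - subst.
    destruct Hv; (destruct (Rle_dec 0 (INR m + u - (INR m + v))); [rewrite Rabs_pos_eq|rewrite Rabs_left1]; lra).
  - assert (INR m + 1 <= INR n) by (rewrite <- S_INR; apply le_INR; lia).
    rewrite Rabs_pos_eq; lra.
Qed.

Lemma edist_ge a1 a2 a3 b1 b2 b3 :
  Rabs (a1 - b1) <= edist (a1,a2,a3) (b1,b2,b3) /\
  Rabs (a2 - b2) <= edist (a1,a2,a3) (b1,b2,b3) /\
  Rabs (a3 - b3) <= edist (a1,a2,a3) (b1,b2,b3).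
Proof.
  simpl. rewrite <- (sqrt_Rsqr_abs (a1-b1)), <- (sqrt_Rsqr_abs (a2-b2)), <- (sqrt_Rsqr_abs (a3-b3)).
  pose proof (Rle_0_sqr (a1-b1)). pose proof (Rle_0_sqr (a2-b2)). pose proof (Rle_0_sqr (a3-b3)).
  unfold Rsqr in *. split; [|split]; apply sqrt_le_1_alt; lra.
Qed.

Lemma edist_le a1 a2 a3 b1 b2 b3 e : 0 <= e ->
  Rabs (a1 - b1) <= e -> Rabs (a2 - b2) <= e -> Rabs (a3 - b3) <= e ->
  edist (a1,a2,a3) (b1,b2,b3) <= 3 * e.
Proof.
  intros He H1 H2 H3. simpl. rewrite <- (sqrt_Rsqr (3*e)) by lra.
  apply sqrt_le_1_alt. unfold Rsqr.
  apply Rabs_le_between in H1; apply Rabs_le_between in H2; apply Rabs_le_between in H3.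
  nra.
Qed.

Lemma transfer g w w' a1 a2 a3 : Fw (g ++ w) (a1,a2,a3) -> (exists q, Fw w' q) ->
  exists b1 b2 b3, Fw (g ++ w') (b1,b2,b3) /\ Rabs (a1 - b1) <= / 5 ^ length g /\
   Rabs (a2 - b2) <= / 5 ^ length g /\ Rabs (a3 - b3) <= / 5 ^ length g.
Proof.
  revert a1 a2 a3; induction g as [|i g IH]; simpl; intros a1 a2 a3 H [[[b1 b2] b3] Hb].
  - exists b1, b2, b3. split; auto. apply Fw_cube in H; apply Fw_cube in Hb. simpl in H, Hb.
    rewrite Rinv_1. repeat split; apply Rabs_le; lra.
  - destruct H as (a&b&c&x&y&z&HD&HA&E). injection E; intros -> -> ->.
    destruct (IH _ _ _ HA (ex_intro _ _ Hb)) as (y1&y2&y3&Hy&H1&H2&H3).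
    exists ((INR a + y1)/5), ((INR b + y2)/5), ((INR c + y3)/5). split.
    + exists a,b,c,y1,y2,y3. auto.
    + assert (P: 0 < 5 ^ length g) by (apply pow_lt; lra).
      assert (forall u v, Rabs (u - v) <= / 5 ^ length g -> forall n,
        Rabs ((INR n + u)/5 - (INR n + v)/5) <= / (5 * 5 ^ length g)).
      { intros u v Huv n. replace ((INR n + u)/5 - (INR n + v)/5) with ((u - v) * /5) by field.
        rewrite Rabs_mult, (Rabs_pos_eq (/5)) by lra. rewrite Rinv_mult.
        rewrite (Rmult_comm (/5)). apply Rmult_le_compat_r; lra. }
      auto.
Qed.

Lemma far g w w' p1 p2 p3 q1 q2 q3 : Fw (g ++ false :: w) (p1,p2,p3) ->
  Fw (g ++ true :: w') (q1,q2,q3) -> 1 / 5 ^ S (length g) <= edist (p1,p2,p3) (q1,q2,q3).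
Proof.
  intros Hp Hq.
  destruct (decomp _ _ _ Hp) as (n1&n2&n3&x1&x2&x3&Hx&E). injection E; intros -> -> ->.
  destruct (decomp _ _ _ Hq) as (m1&m2&m3&y1&y2&y3&Hy&E'). injection E'; intros -> -> ->.
  simpl in Hx, Hy.
  pose proof (sep01 _ _ _ _ (@Fw_cube w) (@Fw_cube w') Hx Hy) as SS.
  simpl in SS.
  assert (P: 0 < 5 ^ length g) by (apply pow_lt; lra).
  assert (K: forall n m u v, mid u -> outr v ->
     1 / 5 ^ S (length g) <= Rabs ((INR n + u)/5^length g - (INR m + v)/5^length g)).
  { intros n m u v Hu Hv. pose proof (intgap n m u v Hu Hv).
    replace ((INR n + u)/5^length g - (INR m + v)/5^length g) with
      (((INR n + u) - (INR m + v)) * / 5^length g) by (field; lra).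
    rewrite Rabs_mult, (Rabs_pos_eq (/ 5^length g)) by (apply Rlt_le, Rinv_0_lt_compat; lra).
    simpl. replace (1 / (5 * 5 ^ length g)) with (1/5 * / 5 ^ length g) by (field; lra).
    apply Rmult_le_compat_r; [apply Rlt_le, Rinv_0_lt_compat|]; lra. }
  pose proof (edist_ge ((INR n1 + x1) / 5 ^ length g) ((INR n2 + x2) / 5 ^ length g)
    ((INR n3 + x3) / 5 ^ length g) ((INR m1 + y1) / 5 ^ length g) ((INR m2 + y2) / 5 ^ length g)
    ((INR m3 + y3) / 5 ^ length g)) as (E1&E2&E3).
  destruct SS as [[A B]|[[A B]|[A B]]].
  - exact (Rle_trans _ _ _ (K n1 m1 x1 y1 A B) E1).
  - exact (Rle_trans _ _ _ (K n2 m2 x2 y2 A B) E2).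
  - exact (Rle_trans _ _ _ (K n3 m3 x3 y3 A B) E3).
Qed.

Lemma split_words al : forall be, length al = length be -> al <> be ->
  exists (g : list bool) (i j : bool) (w w' : list bool), i <> j /\ al = g ++ i :: w /\ be = g ++ j :: w'.
Proof.
  induction al as [|x al IH]; intros [|y be] Hl Hne; simpl in Hl; try discriminate.
  - congruence.
  - destruct (Bool.bool_dec x y) as [<-|Hxy].
    + assert (al <> be) by congruence.
      destruct (IH be ltac:(lia) H) as (g&i&j&w&w'&Hij&->&->).
      exists (x :: g), i, j, w, w'. auto.
    + exists (@nil bool), x, y, al, be. auto.
Qed.

Lemma lcp_split g i j w w' : i <> j -> lcp (g ++ i :: w) (g ++ j :: w') = length g.
Proof.
  intros Hij; induction g as [|x g IH]; simpl.
  - destruct i, j; simpl; congruence.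
  - rewrite Bool.eqb_reflx. auto.
Qed.

Lemma edist_sym p q : edist p q = edist q p.
Proof. destruct p as [[? ?] ?], q as [[? ?] ?]. simpl. f_equal. ring. Qed.

Lemma far2 g i j w w' p q : i <> j -> Fw (g ++ i :: w) p ->
  Fw (g ++ j :: w') q -> 1 / 5 ^ S (length g) <= edist p q.
Proof.
  intros Hij Hp Hq. destruct p as [[p1 p2] p3], q as [[q1 q2] q3].
  destruct i, j; try congruence.
  - rewrite edist_sym. eapply far; eauto.
  - eapply far; eauto.
Qed.

Theorem lemma2 (k : nat) (al be : list bool) :
  length al = k -> length be = k -> al <> be ->
  (forall p, ~ (Fw al p /\ Fw be p)) /\
  Rbar_lt (hausdorff (Fw al) (Fw be)) (Finite (3 * sqrt 5 / 5 ^ (lcp al be))) /\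
  Rbar_le (Finite (1 / 5 ^ (S (lcp al be)))) (setdist (Fw al) (Fw be)).
Proof.
  intros Ha Hb Hne.
  destruct (split_words al be ltac:(congruence) Hne) as (g&i&j&w&w'&Hij&->&->).
  rewrite lcp_split by auto.
  assert (P: 0 < 5 ^ length g) by (apply pow_lt; lra).
  assert (P1: 0 < 1 / 5 ^ S (length g)) by (apply Rdiv_lt_0_compat; [lra|apply pow_lt; lra]).
  split; [|split].
  - intros p [H1 H2]. pose proof (far2 _ _ _ _ _ _ _ Hij H1 H2).
    assert (edist p p = 0).
    { destruct p as [[p1 p2] p3]. simpl.
      replace ((p1 - p1) * ((p1 - p1) * 1) + (p2 - p2) * ((p2 - p2) * 1) + (p3 - p3) * ((p3 - p3) * 1)) with 0 by ring.
      apply sqrt_0. }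
    lra.
  - assert (He: 0 <= / 5 ^ length g) by (apply Rlt_le, Rinv_0_lt_compat; lra).
    assert (Hs: Rbar_le (hausdorff (Fw (g ++ i :: w)) (Fw (g ++ j :: w'))) (3 * / 5 ^ length g)).
    { apply (proj1 (Glb_Rbar_correct _)). split; [lra|split].
      - intros [[a1 a2] a3] Ha'.
        destruct (transfer _ _ _ _ _ _ Ha' (Fw_ne (j :: w'))) as (b1&b2&b3&Hb'&H1&H2&H3).
        exists (b1,b2,b3). split; auto. apply edist_le; auto.
      - intros [[b1 b2] b3] Hb'.
        destruct (transfer _ _ _ _ _ _ Hb' (Fw_ne (i :: w))) as (a1&a2&a3&Ha'&H1&H2&H3).
        exists (a1,a2,a3). split; auto. rewrite edist_sym. apply edist_le; auto. }
    eapply Rbar_le_lt_trans; [exact Hs|]. simpl.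
    assert (1 < sqrt 5). { rewrite <- sqrt_1. apply sqrt_lt_1_alt. lra. }
    unfold Rdiv. rewrite Rmult_assoc. apply Rmult_lt_compat_l; [lra|].
    rewrite <- (Rmult_1_l (/ 5 ^ length g)) at 1. apply Rmult_lt_compat_r; [apply Rinv_0_lt_compat|]; lra.
  - apply (proj2 (Glb_Rbar_correct _)). intros r (a&b&H1&H2&->). simpl.
    eapply far2; eauto.
Qed.
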